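(* Let $p_1,\dots,p_m$ be complex polynomials and for $z\in\mathbb{D}^*$ let $K_z$ be the semigroup generated by the contractions $f_i:x\mapsto zx+p_i(z)$, $1\le i\le m$. Then there is a regular language $L$ over a finite alphabet of complex numbers such that a power series $e(z)=a_0+a_1z+a_2z^2+\cdots$ is $L$-regular if and only if $e\in\partial K_z$, i.e. $e$ is the function of $z$ given by an infinite composition of the generators $f_i$.
   Context: For a right-infinite sequence $s_1s_2s_3\cdots$ of indices in $\{1,\dots,m\}$, the associated infinite composition is $e(z)=\lim_{n\to\infty}f_{s_1}\circ f_{s_2}\circ\cdots\circ f_{s_n}(x)$, which is independent of $x$ and is a power series in $z$; $\partial K_z$ denotes the set of all such power series. Given a finite alphabet $S\subset\mathbb{C}$ and a prefix-closed regular language $L\subseteq S^*$, let $\overline{L}$ be the set of right-infinite words over $S$ all of whose finite prefixes lie in $L$; a power series $a_0+a_1z+a_2z^2+\cdots$ is called $L$-regular if $(a_0,a_1,a_2,\dots)\in\overline{L}$. *)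

(* Defs.v *)
From mathcomp Require Import all_boot all_algebra.
From mathcomp Require Import complex reals.
Set Implicit Arguments. Unset Strict Implicit. Unset Printing Implicit Defensive.
Import GRing.Theory.
Local Open Scope ring_scope.

Record dfa (A : Type) := DFA {
  dfa_state : finType;
  dfa_start : dfa_state;
  dfa_final : pred dfa_state;
  dfa_trans : dfa_state -> A -> dfa_state }.

Definition dfa_accept (A : Type) (d : dfa A) (w : seq A) : bool :=
  @dfa_final A d (foldl (@dfa_trans A d) (@dfa_start A d) w).

Definition regular_lang (A : eqType) (S : seq A) (L : seq A -> Prop) : Prop :=
  exists d : dfa A, forall w, L w <-> (all (mem S) w /\ dfa_accept d w).

Definition prefix_closed (A : Type) (L : seq A -> Prop) : Prop :=
  forall u v : seq A, L (u ++ v) -> L u.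

(* Lbar: right-infinite words all of whose finite prefixes lie in L.
   A power series with coefficient sequence a is L-regular iff a is in Lbar. *)
Definition L_regular (A : Type) (L : seq A -> Prop) (a : nat -> A) : Prop :=
  forall n, L (mkseq a n).

(* Finite composition f_{s_1} o ... o f_{s_n} (x), as a polynomial in z;
   the infinite word s_1 s_2 ... is represented by s : nat -> 'I_m with s_{k+1} = s k. *)
Definition gen_comp (R : realType) (m : nat) (p : 'I_m -> {poly R[i]})
    (s : nat -> 'I_m) (n : nat) (x : R[i]) : {poly R[i]} :=
  foldr (fun i q => 'X * q + p i) x%:P (mkseq s n).

(* e (given by its coefficient sequence a) is the limit (coefficientwise, i.e. in
   the z-adic topology of power series) of f_{s_1} o ... o f_{s_n}(x), for every x. *)
Definition comp_limit (R : realType) (m : nat) (p : 'I_m -> {poly R[i]})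
    (s : nat -> 'I_m) (a : nat -> R[i]) : Prop :=
  forall (x : R[i]) (N : nat), exists n0 : nat, forall n : nat,
    (n0 <= n)%N -> (gen_comp p s n x)`_N = a N.

Definition in_boundary (R : realType) (m : nat) (p : 'I_m -> {poly R[i]})
    (a : nat -> R[i]) : Prop :=
  exists s : nat -> 'I_m, comp_limit p s a.

(* Main.v *)
From Stdlib Require Import Classical ClassicalEpsilon.
Require Import Defs.
From mathcomp Require Import all_boot all_algebra.
From mathcomp Require Import complex reals.
Import GRing.Theory.
Local Open Scope ring_scope.
Set Implicit Arguments. Unset Strict Implicit.

Fixpoint ser (R : realType) (m : nat) (p : 'I_m -> {poly R[i]}) (l : seq 'I_m) (N : nat) : R[i] :=
  match l with
  | [::] => 0
  | i :: l' => (p i)`_N + (if N is N'.+1 then ser p l' N' else 0)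
  end.

Lemma ser_cat (R : realType) (m : nat) (p : 'I_m -> {poly R[i]}) l1 l2 N :
  ser p (l1 ++ l2) N = ser p l1 N + (if (size l1 <= N)%N then ser p l2 (N - size l1) else 0).
Proof.
elim: l1 N => [|i l1 IH] N /=; first by rewrite add0r subn0.
case: N => [|N]; first by rewrite !addr0.
by rewrite IH ltnS subSS addrA.
Qed.

Lemma coef_gen (R : realType) (m : nat) (p : 'I_m -> {poly R[i]}) (x : R[i]) l N :
  (foldr (fun i q => 'X * q + p i) x%:P l)`_N = ser p l N + (if N == size l then x else 0).
Proof.
elim: l N => [|i l IH] N /=.
  by rewrite coefC add0r.
rewrite coefD coefXM; case: N => [|N] /=; first by rewrite add0r !addr0.
have -> := IH N. by rewrite eqSS addrC addrA.
Qed.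

Lemma mkseqS' (T : Type) (s : nat -> T) n : mkseq s n.+1 = rcons (mkseq s n) (s n).
Proof. by rewrite /mkseq -addn1 iotaD map_cat cats1. Qed.

Lemma ser_mkseq (R : realType) (m : nat) (p : 'I_m -> {poly R[i]}) s n N :
  (N < n)%N -> ser p (mkseq s n) N = ser p (mkseq s N.+1) N.
Proof.
elim: n => [//|n IH]; rewrite ltnS leq_eqVlt => /orP[/eqP->//|lt].
by rewrite mkseqS' -cats1 ser_cat size_mkseq leqNgt lt addr0 IH.
Qed.
Definition oc (R : realType) (m : nat) (p : 'I_m -> {poly R[i]}) (o : option 'I_m) (k : nat) : R[i] :=
  if o is Some i then (p i)`_k else 0.

Lemma oc_big (R : realType) (m : nat) (p : 'I_m -> {poly R[i]}) d o k :
  (forall i, (size (p i) <= d)%N) -> (d <= k)%N -> oc p o k = 0.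
Proof.
move=> hs hk; case: o => [i|] //=; apply: nth_default.
exact: leq_trans (hs i) hk.
Qed.

Lemma serW (R : realType) (m : nat) (p : 'I_m -> {poly R[i]}) d :
  (forall i, (size (p i) <= d)%N) -> forall l e,
  ser p l (size l + e) = \sum_(j < d.+1) oc p (nth None (rev (map Some l)) j) (j.+1 + e).
Proof.
move=> hs l; elim/last_ind: l => [|l i IH] e /=.
  by rewrite big1 // => j _; rewrite nth_nil.
rewrite -cats1 ser_cat size_cat /= -addnA leq_addr addKn add1n /= addr0.
rewrite IH map_cat rev_cat /= big_ord_recr big_ord_recl /=.
rewrite (@oc_big _ _ p d _ _ hs) ?addr0; last by rewrite /= addSn ltnW // ltnS leq_addr.
by rewrite addrC add1n; congr (_ + _); apply: eq_bigr => j _; rewrite /bump leq0n add1n add0n !addSn !addnS.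
Qed.

Definition win (m d : nat) (l : seq 'I_m) : {ffun 'I_d.+1 -> option 'I_m} :=
  [ffun j : 'I_d.+1 => nth None (rev (map Some l)) j].

Definition shift (m d : nat) (u : {ffun 'I_d.+1 -> option 'I_m}) (i : 'I_m) :
  {ffun 'I_d.+1 -> option 'I_m} :=
  [ffun j : 'I_d.+1 => if (j : nat) is j'.+1 then u (inord j') else Some i].

Definition cur (R : realType) (m d : nat) (p : 'I_m -> {poly R[i]}) (u : {ffun 'I_d.+1 -> option 'I_m}) : R[i] :=
  \sum_(j < d.+1) oc p (u j) j.

Lemma win_rcons m d (l : seq 'I_m) i : win d (rcons l i) = shift (win d l) i.
Proof.
apply/ffunP => j; rewrite !ffunE -cats1 map_cat rev_cat /=.
case: j => [[|j] hj] //=; rewrite ffunE inordK //.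
exact: ltnW.
Qed.

Lemma cur_win (R : realType) (m : nat) (p : 'I_m -> {poly R[i]}) d :
  (forall i, (size (p i) <= d)%N) -> forall l i,
  cur p (win d (rcons l i)) = ser p (rcons l i) (size l).
Proof.
move=> hs l i; rewrite -cats1 ser_cat leqnn subnn /= addr0.
rewrite -[size l]addn0 (@serW _ _ p d hs) /cur big_ord_recl big_ord_recr /=.
rewrite ffunE map_cat rev_cat /=.
rewrite (@oc_big _ _ p d _ _ hs) ?addr0 //; last by rewrite addn0.
rewrite addrC; congr (_ + _); apply: eq_bigr => j _; rewrite ffunE /bump /= addn0.
by rewrite map_cat rev_cat.
Qed.
Definition trans (R : realType) (m : nat) (p : 'I_m -> {poly R[i]}) d
  (X : {set {ffun 'I_d.+1 -> option 'I_m}}) (x : R[i]) : {set {ffun 'I_d.+1 -> option 'I_m}} :=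
  [set u' | [exists u in X, exists i, (u' == shift u i) && (x == cur p u')]].

Definition mdfa (R : realType) (m : nat) (p : 'I_m -> {poly R[i]}) d : dfa R[i] :=
  @DFA R[i] _ [set win d [::]] (fun X => X != set0) (@trans R m p d).

Definition mtch (R : realType) (m : nat) (p : 'I_m -> {poly R[i]}) (w : seq R[i]) l :=
  forall N, (N < size w)%N -> nth 0 w N = ser p l N.

Lemma inv (R : realType) (m : nat) (p : 'I_m -> {poly R[i]}) d :
  (forall i, (size (p i) <= d)%N) -> forall w u,
  u \in foldl (@trans R m p d) [set win d [::]] w <->
  exists l, [/\ size l = size w, mtch p w l & win d l = u].
Proof.
move=> hs w; elim/last_ind: w => [|w x IH] u /=.
  rewrite inE; split => [/eqP->|[l [/size0nil -> _ <-]]] //.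
  by exists [::]; split.
rewrite foldl_rcons inE; split.
  move=> /existsP[u0 /andP[u0X /existsP[i /andP[/eqP eu /eqP ex]]]].
  have [l [sl ml wl]] := (IH u0).1 u0X.
  exists (rcons l i); split; first by rewrite !size_rcons sl.
    move=> N; rewrite size_rcons ltnS leq_eqVlt => /orP[/eqP->|lt].
      by rewrite nth_rcons ltnn eqxx ex eu -wl -win_rcons (@cur_win _ _ p d hs) sl.
    by rewrite nth_rcons lt ml // -cats1 ser_cat sl leqNgt lt addr0.
  by rewrite win_rcons wl eu.
move=> [l' [sl' ml' <-]].
case/lastP: l' sl' ml' => [|l i]; first by rewrite size_rcons.
rewrite !size_rcons => /eqP; rewrite eqSS => /eqP sl ml.
apply/existsP; exists (win d l); apply/andP; split.
  apply/(IH _).2; exists l; split => // N lt.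
  have := ml N; rewrite size_rcons ltnS ltnW // => /(_ isT).
  by rewrite nth_rcons lt -cats1 ser_cat sl leqNgt lt addr0.
apply/existsP; exists i; rewrite win_rcons eqxx /=.
have := ml (size w); rewrite size_rcons ltnSn nth_rcons ltnn eqxx => /(_ isT) ->.
by rewrite -win_rcons (@cur_win _ _ p d hs) sl.
Qed.

Lemma fold0 (R : realType) (m : nat) (p : 'I_m -> {poly R[i]}) d v :
  foldl (@trans R m p d) set0 v = set0.
Proof.
elim: v => [|x v IH] //=.
suff -> : trans p (set0 : {set {ffun 'I_d.+1 -> option 'I_m}}) x = set0 by [].
apply/setP => u; rewrite !inE; apply/negbTE/existsP => -[u0]; by rewrite inE.
Qed.

Lemma konig (R : realType) (m : nat) (p : 'I_m -> {poly R[i]}) (a : nat -> R[i]) :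
  (forall n, exists l, size l = n /\ forall N, (N < n)%N -> a N = ser p l N) ->
  exists s : nat -> 'I_m, forall N, a N = ser p (mkseq s N.+1) N.
Proof.
move=> Hreg.
pose M l := forall N, (N < size l)%N -> a N = ser p l N.
have Mpre : forall u v, M (u ++ v) -> M u.
  move=> u v H N lt; rewrite H ?size_cat ?(leq_trans lt) ?leq_addr //.
  by rewrite ser_cat leqNgt lt addr0.
pose ext u := forall n, exists v, size v = n /\ M (u ++ v).
have ext0 : ext [::] by move=> n; have [l [sl ml]] := Hreg n; exists l; split => //; rewrite /M sl.
have step : forall u, ext u -> exists i, ext (rcons u i).
  move=> u eu; apply: NNPP => H.
  have Hex : forall i, exists n, forall v, size v = n -> ~ M (rcons u i ++ v).
    move=> i; apply: NNPP => H2; apply: H; exists i => n.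
    apply: NNPP => H3; apply: H2; exists n => v sv Mv; apply: H3; by exists v.
  pose nf i := proj1_sig (constructive_indefinite_description _ (Hex i)).
  have nfP i : forall v, size v = nf i -> ~ M (rcons u i ++ v).
    exact: (proj2_sig (constructive_indefinite_description _ (Hex i))).
  have [v [sv Mv]] := eu (\max_i nf i).+1.
  case: v sv Mv => [//|i v'] /= [sv'] Mv.
  apply: (nfP i (take (nf i) v')).
    rewrite size_take sv'; case: ltnP => // h; apply/eqP; rewrite eqn_leq h.
    exact: (leq_bigmax i).
  apply: (Mpre (rcons u i ++ take (nf i) v') (drop (nf i) v')); by rewrite -catA cat_take_drop cat_rcons.
have [i0 _] := step _ ext0.
pose nxt u := epsilon (inhabits i0) (fun i => ext (rcons u i)).
pose pref := fix pref n := if n is n'.+1 then rcons (pref n') (nxt (pref n')) else [::].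
have extp : forall n, ext (pref n).
  elim=> [//|n IH] /=; exact: (epsilon_spec (inhabits i0) (fun i => ext (rcons (pref n) i)) (step _ IH)).
exists (fun n => nxt (pref n)).
have pm : forall n, pref n = mkseq (fun n => nxt (pref n)) n.
  by elim=> [//|n IH]; rewrite mkseqS' /= IH.
move=> N; have [v [sv Mv]] := extp N.+1 0%N.
move: sv Mv => /size0nil ->; rewrite cats0 pm => Mv.
by apply: Mv; rewrite size_mkseq.
Qed.

Theorem proposition4p3p2 (R : realType) (m : nat) (p : 'I_m -> {poly R[i]}) :
  exists (S : seq R[i]) (L : seq R[i] -> Prop),
    [/\ regular_lang S L, prefix_closed L &
        forall a : nat -> R[i], L_regular L a <-> in_boundary p a].
Proof.
pose d := (\max_i size (p i))%N.
have hs : forall i, (size (p i) <= d)%N by move=> i; exact: leq_bigmax.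
pose S := codom (fun u : {ffun 'I_d.+1 -> option 'I_m} => cur p u).
exists S, (fun w => all (mem S) w /\ dfa_accept (mdfa p d) w); split.
- by exists (mdfa p d).
- move=> u v [Ha Hacc]; split; first by move: Ha; rewrite all_cat => /andP[].
  move: Hacc; rewrite /dfa_accept /= foldl_cat; apply: contraNN => /eqP ->.
  by rewrite fold0.
move=> a; split.
  move=> Hreg; have [s Hs] : exists s : nat -> 'I_m, forall N, a N = ser p (mkseq s N.+1) N.
    apply: konig => n; have [_ Hacc] := Hreg n.
    move: Hacc; rewrite /dfa_accept /= => /set0Pn[u /(@inv _ _ p d hs)[l [sl ml _]]].
    exists l; split; first by rewrite sl size_mkseq.
    by move=> N lt; rewrite -ml ?size_mkseq // nth_mkseq.
  exists s => x N; exists N.+1 => n hn.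
  rewrite /gen_comp coef_gen size_mkseq.
  by rewrite (ltn_eqF hn) addr0 ser_mkseq // Hs.
move=> [s Hc].
have Hs : forall N, a N = ser p (mkseq s N.+1) N.
  move=> N; have [n0 Hn] := Hc 0 N.
  have := Hn (maxn n0 N.+1) (leq_maxl _ _).
  rewrite /gen_comp coef_gen size_mkseq (ltn_eqF (leq_maxr _ _)) addr0 => <-.
  by rewrite ser_mkseq // leq_maxr.
move=> n; split.
  apply/allP => x /mapP[N _ ->]; rewrite Hs mkseqS'.
  have := @cur_win _ _ p d hs (mkseq s N) (s N); rewrite size_mkseq => <-.
  exact: codom_f.
rewrite /dfa_accept /=; apply/set0Pn; exists (win d (mkseq s n)).
apply/(@inv _ _ p d hs); exists (mkseq s n); split; rewrite ?size_mkseq //.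
move=> N; rewrite size_mkseq => lt; rewrite nth_mkseq // Hs ser_mkseq //.
Qed.
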